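(* Let $V$ be a module over the subalgebra $\mathfrak{b}=\bigoplus_{m\geq 0}(\mathbb{C}L_m\oplus\mathbb{C}G_m)\oplus\mathbb{C}c$ of the Ramond algebra $\mathcal{R}$. Assume that there exists $t\in\mathbb{Z}_+$ such that (1) the action of $L_t$ on $V$ is injective, and (2) $L_iV=0$ for all $i>t$. Then $G_jV=0$ for all $j>t$.
   Context: The Ramond algebra $\mathcal{R}=\mathcal{R}_{\bar 0}\oplus\mathcal{R}_{\bar 1}$ is the Lie superalgebra with basis $\{L_m,G_m,c\mid m\in\mathbb{Z}\}$, where $\mathcal{R}_{\bar 0}=\mathrm{span}\{L_m,c\}$, $\mathcal{R}_{\bar 1}=\mathrm{span}\{G_m\}$, and brackets $[L_m,L_n]=(m-n)L_{m+n}+\delta_{m+n,0}\frac{m^3-m}{12}c$, $[L_m,G_n]=(\frac m2-n)G_{m+n}$, $[G_m,G_n]=2L_{m+n}+\frac13\delta_{m+n,0}(m^2-\frac14)c$, $[\mathcal{R},c]=0$. Modules are $\mathbb{Z}_2$-graded (super)modules. $\mathbb{Z}_+$ denotes the positive integers. *)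

(* Defs.v *)
From mathcomp Require Import all_boot all_order all_algebra.
From mathcomp Require Import complex.
From mathcomp Require Import reals.
Set Implicit Arguments. Unset Strict Implicit. Unset Printing Implicit Defensive.
Import Order.TTheory GRing.Theory Num.Theory.
Local Open Scope ring_scope.

Section BModule.
Variables (K : fieldType) (V : lmodType K).

Definition lin_op (f : V -> V) : Prop :=
  forall (a : K) (u v : V), f (a *: u + v) = a *: f u + f v.

Definition subspace (P : V -> Prop) : Prop :=
  P 0 /\ forall (a : K) (u v : V), P u -> P v -> P (a *: u + v).

Definition z2_grading (V0 V1 : V -> Prop) : Prop :=
  [/\ subspace V0, subspace V1,
      (forall v, exists v0 v1, [/\ V0 v0, V1 v1 & v = v0 + v1]) &
      (forall v, V0 v -> V1 v -> v = 0)].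

(* (L, G, c, V0, V1) makes V a Z_2-graded module over the subalgebra
   b = (+)_{m>=0} (K L_m (+) K G_m) (+) K c of the Ramond algebra:
   L m, G m, c are the actions of L_m, G_m (m >= 0) and c; L m and c are
   even, G m is odd; the super-brackets of b act as super-commutators:
   [x,y] acts as x y - (-1)^{|x||y|} y x. *)
Definition b_module (L G : nat -> V -> V) (c : V -> V) (V0 V1 : V -> Prop) : Prop :=
  [/\ (forall m, lin_op (L m)) /\ (forall m, lin_op (G m)) /\ lin_op c,
      z2_grading V0 V1,
      [/\ (forall m v, (V0 v -> V0 (L m v)) /\ (V1 v -> V1 (L m v))),
          (forall m v, (V0 v -> V1 (G m v)) /\ (V1 v -> V0 (G m v))) &
          (forall v, (V0 v -> V0 (c v)) /\ (V1 v -> V1 (c v)))] &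
      [/\
      (forall (m n : nat) v,
         L m (L n v) - L n (L m v) =
           (m%:R - n%:R) *: L (m + n)%N v
           + ((m + n == 0)%N%:R * ((m%:R ^+ 3 - m%:R) / 12%:R)) *: c v),
      (forall (m n : nat) v,
         L m (G n v) - G n (L m v) = (m%:R / 2%:R - n%:R) *: G (m + n)%N v),
      (forall (m n : nat) v,
         G m (G n v) + G n (G m v) =
           2%:R *: L (m + n)%N v
           + ((m + n == 0)%N%:R / 3%:R * (m%:R ^+ 2 - 1 / 4%:R)) *: c v) &
      (forall m v, c (L m v) = L m (c v) /\ c (G m v) = G m (c v))]].

End BModule.

(* Main.v *)
Require Import Defs.
From mathcomp Require Import all_boot all_order all_algebra.
From mathcomp Require Import complex.
From mathcomp Require Import reals.
Import Order.TTheory GRing.Theory Num.Theory.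
Local Open Scope ring_scope.

Theorem lemma3p1 (R : realType) (V : lmodType R[i])
  (L G : nat -> V -> V) (c : V -> V) (V0 V1 : V -> Prop)
  (HV : b_module L G c V0 V1)
  (t : nat) (t_pos : (0 < t)%N)
  (Hinj : injective (L t))
  (Hvan : forall (i : nat), (t < i)%N -> forall v : V, L i v = 0) :
  forall (j : nat), (t < j)%N -> forall v : V, G j v = 0.
Proof.
move=> j Hj v.
case: HV => [[_ [HG _]]] _ _ [_ HLG _ _].
have G00 : G 0%N 0 = 0.
  have := HG 0%N (-1) 0 0.
  by rewrite scaler0 add0r scaleN1r addNr.
have := HLG j 0%N v.
rewrite addn0 Hvan // Hvan // G00 subr0 subr0.
move/esym/eqP; rewrite scaler_eq0 => /orP [|/eqP //].
rewrite mulf_eq0 invr_eq0 !pnatr_eq0 /=.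
by case: j Hj.
Qed.
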